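(* Let $G_{n\times n}$ denote the $n\times n$ square grid graph and $\pi_{\mathrm{opt}}(G_{n\times n})$ its optimal pebbling number. Then $$\liminf_{n\to\infty}\frac{n^2}{\pi_{\mathrm{opt}}(G_{n\times n})}\ \ge\ \frac{7}{2};$$ that is, there are solvable pebble distributions on arbitrarily large square grids whose covering ratios converge to $3.5$.
   Context: A pebble distribution on a graph $G$ is a function $D:V(G)\to\mathbb{N}$; its size is $|D|=\sum_v D(v)$. A pebbling move along an edge $vu$ with $D(v)\ge 2$ removes two pebbles from $v$ and adds one pebble to $u$. A vertex $v$ is reachable under $D$ if $D(v)\ge 1$ or there is a sequence of pebbling moves whose last move places a pebble on $v$. $D$ is solvable if every vertex is reachable. The covering ratio of $D$ is the number of reachable vertices divided by $|D|$. The optimal pebbling number $\pi_{\mathrm{opt}}(G)$ is the minimum size of a solvable distribution on $G$. The $n\times n$ grid $G_{n\times n}$ is the Cartesian product of two paths on $n$ vertices. *)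

(* Defs.v *)
From HB Require Import structures.
From mathcomp Require Import all_boot all_order all_algebra.
From mathcomp Require Import boolp classical_sets reals constructive_ereal.
From mathcomp Require Import topology normedtype sequences.
From Stdlib Require Import Relations.

Set Implicit Arguments.
Unset Strict Implicit.
Unset Printing Implicit Defensive.

Definition distribution (V : finType) := {ffun V -> nat}.

Definition dsize (V : finType) (D : distribution V) : nat := \sum_(v : V) D v.

Definition move_result (V : finType) (D : distribution V) (v u : V) : distribution V :=
  [ffun w => if w == v then D w - 2 else if w == u then (D w).+1 else D w].

Definition pebble_step (V : finType) (e : rel V) (D D' : distribution V) : Prop :=
  exists v u, e v u /\ 2 <= D v /\ D' = move_result D v u.

Definition pebble_steps (V : finType) (e : rel V) : relation (distribution V) :=
  clos_refl_trans (distribution V) (pebble_step e).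

Definition reachable (V : finType) (e : rel V) (D : distribution V) (v : V) : Prop :=
  1 <= D v \/
  exists (D' : distribution V) (u : V), pebble_steps e D D' /\ e u v /\ 2 <= D' u.

Definition solvable (V : finType) (e : rel V) (D : distribution V) : Prop :=
  forall v, reachable e D v.

Lemma exists_solvable_size (V : finType) (e : rel V) :
  exists k, `[< exists D : distribution V, solvable e D /\ dsize D = k >].
Proof.
exists (dsize [ffun _ : V => 1]); apply/asboolP.
exists [ffun _ => 1]; split => // v; left; by rewrite ffunE.
Qed.

Definition pi_opt (V : finType) (e : rel V) : nat := ex_minn (exists_solvable_size e).

Definition path_adj (n : nat) (i j : 'I_n) : bool := (i.+1 == j) || (j.+1 == i).

Definition grid_adj (n : nat) : rel ('I_n * 'I_n) :=
  fun x y => ((x.1 == y.1) && path_adj x.2 y.2) || ((x.2 == y.2) && path_adj x.1 y.1).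

Definition pi_opt_grid (n : nat) : nat := pi_opt (@grid_adj n).

(* Main.v *)
Require Import Defs.
From HB Require Import structures.
From mathcomp Require Import all_boot all_order all_algebra.
From mathcomp Require Import boolp classical_sets reals constructive_ereal.
From mathcomp Require Import topology normedtype sequences.
From mathcomp Require Import ereal zify lra.
From Stdlib Require Import Relations.

Set Implicit Arguments.
Unset Strict Implicit.
Unset Printing Implicit Defensive.

Definition lfun := nat -> nat -> nat.
Definition lmove (g : lfun) (s t : nat * nat) : lfun :=
  fun a b => if (a, b) == s then g a b - 2 else if (a, b) == t then (g a b).+1 else g a b.
Definition ladj (s t : nat * nat) : bool :=
  ((s.1 == t.1) && ((s.2.+1 == t.2) || (t.2.+1 == s.2))) ||
  ((s.2 == t.2) && ((s.1.+1 == t.1) || (t.1.+1 == s.1))).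
Definition inw (s : nat * nat) : bool := (s.1 < 9) && (s.2 < 9).
Fixpoint run (g : lfun) (pl : seq ((nat * nat) * (nat * nat))) : option lfun :=
  match pl with
  | [::] => Some g
  | (s, t) :: pl' =>
    if [&& inw s, inw t, ladj s t & 2 <= g s.1 s.2] then run (lmove g s t) pl' else None
  end.
Definition nbrsC : seq (nat * nat) := [:: (5,4); (3,4); (4,5); (4,3)].
Definition goodfin (g : lfun) : bool := has (fun t => 2 <= g t.1 t.2) nbrsC.
Definition fpat (p q : nat) : lfun :=
  fun a b => if ((p + b) %% 2 == 0) && ((q + a + 6 * b) %% 7 == 0) then 4 else 0.
Definition check p q pl : bool :=
  if run (fpat p q) pl is Some g then goodfin g else false.

Definition plan (p q : nat) : seq ((nat * nat) * (nat * nat)) :=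
  match p, q with
  | 0, 0 => [:: ((4,4),(4,3)); ((4,4),(4,3))]
  | 0, 1 => [:: ]
  | 0, 2 => [:: ((2,4),(3,4)); ((2,4),(3,4))]
  | 0, 3 => [:: ((1,4),(2,4)); ((1,4),(2,4)); ((2,4),(3,4)); ((3,6),(3,5)); ((3,6),(3,5)); ((3,5),(3,4))]
  | 0, 4 => [:: ((0,4),(1,4)); ((0,4),(1,4)); ((1,4),(2,4)); ((2,6),(3,6)); ((2,6),(3,6)); ((3,6),(4,6)); ((4,8),(4,7)); ((4,8),(4,7)); ((4,7),(4,6)); ((4,6),(4,5)); ((5,2),(5,3)); ((5,2),(5,3)); ((5,3),(5,4)); ((7,4),(6,4)); ((7,4),(6,4)); ((6,4),(5,4))]
  | 0, 5 => [:: ((4,2),(4,3)); ((4,2),(4,3))]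
  | 0, 6 => [:: ]
  | 1, 0 => [:: ((3,3),(4,3)); ((3,3),(4,3))]
  | 1, 1 => [:: ]
  | 1, 2 => [:: ((1,3),(2,3)); ((1,3),(2,3)); ((2,3),(3,3)); ((3,5),(4,5)); ((3,5),(4,5))]
  | 1, 3 => [:: ((2,5),(3,5)); ((2,5),(3,5)); ((3,5),(4,5)); ((4,7),(4,6)); ((4,7),(4,6)); ((4,6),(4,5))]
  | 1, 4 => [:: ((1,5),(2,5)); ((1,5),(2,5)); ((2,5),(3,5)); ((3,7),(4,7)); ((3,7),(4,7)); ((4,1),(4,2)); ((4,1),(4,2)); ((4,2),(4,3)); ((4,7),(4,6)); ((6,3),(5,3)); ((6,3),(5,3)); ((5,3),(4,3))]
  | 1, 5 => [:: ((3,1),(4,1)); ((3,1),(4,1)); ((4,1),(4,2)); ((5,3),(4,3)); ((5,3),(4,3))]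
  | 1, 6 => [:: ]

  | _, _ => [::]
  end.

Lemma plan_ok p q : p < 2 -> q < 7 -> check p q (plan p q).
Proof.
by case: p => [|[|]] //; case: q => [|[|[|[|[|[|[|]]]]]]] //; vm_compute.
Qed.

Section Transport.
Variable n : nat.
Variable v0 : 'I_n * 'I_n.
Variables i0 j0 : nat.
Hypothesis hi : i0 + 9 <= n.
Hypothesis hj : j0 + 9 <= n.

Definition phi (s : nat * nat) : 'I_n * 'I_n :=
  (insubd v0.1 (i0 + s.1), insubd v0.2 (j0 + s.2)).

Lemma phi1 s : inw s -> nat_of_ord (phi s).1 = i0 + s.1.
Proof. case/andP=> h1 h2; rewrite /= -[nat_of_ord _]/(val _) val_insubd ifT //; lia. Qed.
Lemma phi2 s : inw s -> nat_of_ord (phi s).2 = j0 + s.2.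
Proof. case/andP=> h1 h2; rewrite /= -[nat_of_ord _]/(val _) val_insubd ifT //; lia. Qed.

Lemma phi_eq s s' : inw s -> inw s' -> (phi s == phi s') = (s == s').
Proof.
move=> hs hs'; apply/eqP/eqP => [E|->] //.
have E1 := phi1 hs; have E2 := phi2 hs; have E1' := phi1 hs'; have E2' := phi2 hs'.
rewrite E in E1 E2; move: s s' {hs hs' E} E1 E2 E1' E2' => [a b] [c d] /= -> -> h1 h2.
congr pair; lia.
Qed.

Lemma phi_adj s t : inw s -> inw t -> ladj s t -> grid_adj (phi s) (phi t).
Proof.
move=> hs ht; rewrite /grid_adj /path_adj -!val_eqE !phi1 // !phi2 //.
move: s t {hs ht} => [a b] [c d]; rewrite /ladj /=.
case/orP=> /andP[/eqP-> /orP[/eqP<-|/eqP<-]]; rewrite !eqxx ?addnS ?eqxx ?orbT //.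
Qed.

Definition inv (g : lfun) (D : distribution ('I_n * 'I_n)%type) :=
  forall s, inw s -> g s.1 s.2 <= D (phi s).

Lemma run_sound pl g D g' : inv g D -> run g pl = Some g' ->
  exists D', pebble_steps (@grid_adj n) D D' /\ inv g' D'.
Proof.
elim: pl g D => [|[s t] pl IH] g D hinv /=.
  by case=> <-; exists D; split => //; apply: rt_refl.
case: ifP => // /and4P[hs ht hst h2] hrun.
have hinv1 : inv (lmove g s t) (move_result D (phi s) (phi t)).
  move=> [a b] hab; rewrite /lmove ffunE !phi_eq //=.
  have := hinv (a, b) hab; rewrite /=.
  case: ifP => _; first by move=> h; apply: leq_sub2r.
  by case: ifP.
have [D' [st inv']] := IH _ _ hinv1 hrun.
exists D'; split => //; apply: rt_trans st; apply: rt_step.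
exists (phi s), (phi t); split; first exact: phi_adj.
split => //; apply: leq_trans h2 _; exact: hinv.
Qed.

Lemma reach_from pl g g' D v : inv g D -> run g pl = Some g' -> goodfin g' ->
  phi (4, 4) = v -> reachable (@grid_adj n) D v.
Proof.
move=> hinv hrun hgood hv; right.
have [D' [st inv']] := run_sound hinv hrun.
move: hgood; rewrite /goodfin /nbrsC /= => hg.
have key : forall t, inw t -> ladj t (4, 4) -> 2 <= g' t.1 t.2 ->
    exists D0 u, pebble_steps (@grid_adj n) D D0 /\ grid_adj u v /\ 2 <= D0 u.
  move=> t ht hadj h2; exists D', (phi t); split => //; split.
    by rewrite -hv; apply: phi_adj.
  by apply: leq_trans h2 _; apply: inv'.
case/orP: hg => [h|/orP[h|/orP[h|/orP[h|//]]]].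
- exact: (key (5,4)).
- exact: (key (3,4)).
- exact: (key (4,5)).
- exact: (key (4,3)).
Qed.

End Transport.

Definition inL (x y : nat) : bool := (y %% 2 == 0) && ((x + 6 * y) %% 7 == 0).
Definition inB (n x y : nat) : bool := [|| x < 4, n <= x + 4, y < 4 | n <= y + 4].
Definition Dg n : distribution ('I_n * 'I_n)%type :=
  [ffun v : ('I_n * 'I_n)%type => if inL v.1 v.2 then 4 else if inB n v.1 v.2 then 1 else 0].

Lemma Dg_solvable n : solvable (@grid_adj n) (Dg n).
Proof.
move=> [x y]; case hB: (inB n x y).
  by left; rewrite ffunE /= hB; case: ifP.
have hp : y %% 2 < 2 by rewrite ltn_mod.
have hq : (x + 6 * y) %% 7 < 7 by rewrite ltn_mod.
have := plan_ok hp hq; rewrite /check.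
case E: run => [g'|] // hg.
move: hB; rewrite /inB => /negbT; rewrite !negb_or -!ltnNge => /and4P[h1 h2 h3 h4].
have hi : x - 4 + 9 <= n by lia.
have hj : y - 4 + 9 <= n by lia.
apply: (@reach_from n (x, y) (x - 4) (y - 4) hi hj _ _ _ _ _ _ E) => //.
  move=> [a b] hab; rewrite /fpat ffunE.
  have := phi1 (x, y) hi hj hab; have := phi2 (x, y) hi hj hab.
  case: (phi _ _ _ (a, b)) => [u w] /= -> ->.
  case: ifP => // /andP[/eqP H1 /eqP H2].
  move: hab; rewrite /inw /= => /andP[ha hb].
  have -> : inL (x - 4 + a) (y - 4 + b).
    rewrite /inL; apply/andP; split; apply/eqP.
    lia.
    lia.
  by [].
have := phi1 (x, y) hi hj (s:=(4,4)) isT; have := phi2 (x, y) hi hj (s:=(4,4)) isT.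
case: (phi _ _ _ (4, 4)) => [u w] /= e2 e1.
by congr pair; apply: val_inj => /=; lia.
Qed.

Lemma cnt7 c m : \sum_(0 <= x < m) ((x + c) %% 7 == 0 : nat) = (c + m + 6) %/ 7 - (c + 6) %/ 7.
Proof.
elim: m => [|m IH]; first by rewrite big_nil addn0 subnn.
rewrite big_nat_recr //= IH; case: eqP => h /=; lia.
Qed.

Lemma cnt2 c m : \sum_(0 <= x < m) ((x + c) %% 2 == 0 : nat) = (c + m + 1) %/ 2 - (c + 1) %/ 2.
Proof.
elim: m => [|m IH]; first by rewrite big_nil addn0 subnn.
rewrite big_nat_recr //= IH; case: eqP => h /=; lia.
Qed.

Lemma cntlt m k : \sum_(0 <= x < m) (x < k : nat) = minn m k.
Proof.
elim: m => [|m IH]; first by rewrite big_nil; lia.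
rewrite big_nat_recr //= IH; case: ltnP => h /=; lia.
Qed.

Lemma cntge m N : \sum_(0 <= x < m) (N <= x + 4 : nat) = m - minn m (N - 4).
Proof.
elim: m => [|m IH]; first by rewrite big_nil; lia.
rewrite big_nat_recr //= IH; case: leqP => h /=; lia.
Qed.

Definition Dgnat n i j : nat := if inL i j then 4 else if inB n i j then 1 else 0.

Lemma dsize_nat n : dsize (Dg n) = \sum_(0 <= i < n) \sum_(0 <= j < n) Dgnat n i j.
Proof.
rewrite /dsize.
transitivity (\sum_(p : 'I_n * 'I_n) Dgnat n p.1 p.2).
  by apply: eq_bigr => -[i j] _; rewrite ffunE.
rewrite -(pair_big xpredT xpredT (fun (i j : 'I_n) => Dgnat n i j)) /= big_mkord.
by apply: eq_bigr => i _; rewrite big_mkord.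
Qed.

Definition fb n i : nat := (i < 4) + (n <= i + 4).

Lemma sum_fb n : \sum_(0 <= i < n) fb n i <= 8.
Proof. rewrite /fb big_split /= cntlt cntge; lia. Qed.

Definition cA i j : nat := ((j + 0) %% 2 == 0) * ((i + 6 * j) %% 7 == 0).

Lemma sum_cA n : \sum_(0 <= i < n) \sum_(0 <= j < n) cA i j <= (n %/ 2 + 1) * (n %/ 7 + 1).
Proof.
rewrite exchange_big_nat.
apply: (@leq_trans (\sum_(0 <= j < n) ((j + 0) %% 2 == 0) * (n %/ 7 + 1))).
  apply: leq_sum => j _; rewrite /cA -big_distrr /=; apply: leq_mul => //.
  rewrite cnt7; lia.
rewrite -big_distrl /= cnt2; apply: leq_mul => //; lia.
Qed.

Lemma dsize_bound n : dsize (Dg n) <= 4 * ((n %/ 2 + 1) * (n %/ 7 + 1)) + 16 * n.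
Proof.
rewrite dsize_nat.
have step : forall i j, Dgnat n i j <= 4 * cA i j + (fb n i + fb n j).
  move=> i j; rewrite /Dgnat /inL /inB /fb /cA addn0.
  case: (j %% 2 == 0); case: ((i + 6 * j) %% 7 == 0) => /=;
    case: (i < 4); case: (n <= i + 4); case: (j < 4); case: (n <= j + 4) => //.
apply: (@leq_trans (\sum_(0 <= i < n) \sum_(0 <= j < n) (4 * cA i j + (fb n i + fb n j)))).
  by apply: leq_sum => i _; apply: leq_sum => j _; apply: step.
have e1 : forall i, \sum_(0 <= j < n) (4 * cA i j + (fb n i + fb n j)) =
    4 * \sum_(0 <= j < n) cA i j + (n * fb n i + \sum_(0 <= j < n) fb n j).
  move=> i.
  rewrite (big_split _ _ _ (fun j => 4 * cA i j) (fun j => fb n i + fb n j)).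
  rewrite (big_split _ _ _ (fun j => fb n i) (fun j => fb n j)).
  by rewrite sum_nat_const_nat subn0 (mulnC n) big_distrr.
rewrite (eq_bigr _ (fun i _ => e1 i)).
rewrite (big_split _ _ _ (fun i => 4 * \sum_(0 <= j < n) cA i j) (fun i => n * fb n i + \sum_(0 <= j < n) fb n j)).
rewrite (big_split _ _ _ (fun i => n * fb n i) (fun i => \sum_(0 <= j < n) fb n j)).
rewrite sum_nat_const_nat subn0 -!big_distrr /=.
have hA := sum_cA n.
have hB := sum_fb n.
nia.
Qed.

Lemma pi_le n : pi_opt_grid n <= 4 * ((n %/ 2 + 1) * (n %/ 7 + 1)) + 16 * n.
Proof.
rewrite /pi_opt_grid /pi_opt; case: ex_minnP => m hm hmin.
apply: leq_trans (hmin _ _) (dsize_bound n); apply/asboolP.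
by exists (Dg n); split => //; exact: Dg_solvable.
Qed.

Lemma le_dsize (V : finType) (D : distribution V) w : D w <= dsize D.
Proof. by rewrite /dsize (bigD1 w) //= leq_addr. Qed.

Lemma zero_steps (V : finType) (e : rel V) D D' : pebble_steps e D D' ->
  (forall w, D w = 0) -> forall w, D' w = 0.
Proof.
elim => [x y [v [u [_ [h2 _]]]]|x|x y z _ IH1 _ IH2] hz //.
- by rewrite hz in h2.
- by apply: IH2; apply: IH1.
Qed.

Lemma pi_pos n : 0 < n -> 0 < pi_opt_grid n.
Proof.
move=> n0; rewrite /pi_opt_grid /pi_opt; case: ex_minnP => m hm _; case/asboolP: hm => D [hs hsz].
rewrite lt0n; apply/eqP => m0; rewrite m0 in hsz.
have hz : forall w, D w = 0 by move=> w; apply/eqP; rewrite -leqn0 -hsz le_dsize.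
pose v0 : 'I_n * 'I_n := (Ordinal n0, Ordinal n0).
case: (hs v0) => [|[D' [u [st [_ h2]]]]]; first by rewrite hz.
by rewrite (zero_steps st hz) in h2.
Qed.
Import Order.TTheory GRing.Theory Num.Theory.

Lemma pi_nat n : 0 < n -> 7 * pi_opt_grid n <= 2 * n ^ 2 + 160 * n.
Proof.
move=> n0; have h := pi_le n.
set a := n %/ 2 in h; set b := n %/ 7 in h.
have h2 : 2 * a <= n by rewrite /a; lia.
have h7 : 7 * b <= n by rewrite /b; lia.
clearbody a b.
have hab : 14 * (a * b) <= n ^ 2.
  have := leq_mul h2 h7; rewrite expnS expn1; nia.
nia.
Qed.

Section RB.
Local Open Scope ring_scope.
Lemma rb (R : realType) (k P e : R) : (0 < e -> 0 < P -> 0 < k -> 280 <= k * e ->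
  7 * P <= 2 * k ^+ 2 + 160 * k -> (7 / 2 - e) * P <= k ^+ 2)%R.
Proof.
move=> e0 P0 k0 ke h.
have [c0|c0] := leP (7/2 - e) 0.
  by apply: le_trans (_ : 0 <= _); [apply: mulr_le0_ge0; lra | apply: sqr_ge0].
nra.
Qed.
End RB.

Theorem mainTheorem2 (R : realType) :
  ((7%:R / 2%:R : R)%:E <=
   limn_einf (fun n : nat => ((n ^ 2)%:R / (pi_opt_grid n)%:R : R)%:E))%E.
Proof.
rewrite limn_einf_lim; apply/lee_subgt0Pr => e e0.
apply: lime_ge; first exact: is_cvg_einfs.
pose K := (Num.truncn (280 / e)%R).+1.
exists K => // m /= Km.
apply: le_ereal_inf_tmp => _ [k /= mk <-].
have kK : (K <= k)%N by apply: leq_trans Km mk.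
have k0 : (0 < k)%N by apply: leq_trans kK.
rewrite -EFinB lee_fin.
have P0 : (0 < (pi_opt_grid k)%:R :> R)%R by rewrite ltr0n pi_pos.
rewrite ler_pdivlMr // natrX.
apply: rb => //.
- by rewrite ltr0n.
- have h1 : (280 / e < K%:R :> R)%R by exact: truncnS_gt.
  have h2 : (K%:R <= k%:R :> R)%R by rewrite ler_nat.
  have h3 : (280 / e < k%:R :> R)%R by apply: lt_le_trans h2.
  by rewrite -ler_pdivrMr // ltW.
- have := @pi_nat k k0; rewrite -(ler_nat R) natrD !natrM => h.
  by rewrite expr2.
Qed.
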